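(* Let $P$ be a closed process of the Value-Passing Quality Calculus in which variables and names are bound exactly once, and let $l$ be a label. For any input variable $x$ in $P$, there exists exactly one formula $\varphi \Rightarrow \bar{x}$ in the translation $P^l_{\Rightarrow}$, and $\bar{x}$ does not occur in $\varphi$.
   Context: Syntax: $P ::= \mathsf{0} \mid (\nu c)P \mid P_1 \mid P_2 \mid {^l}b.P \mid {^l}\bar{c}\langle t\rangle.P \mid\ !P \mid {^l}\mathsf{case}\ x\ \mathsf{of}\ \mathsf{some}(y): P_1\ \mathsf{else}\ P_2$; binders $b ::= c?x \mid \&_q(b_1,\dots,b_n)$ where $q$ is a quality guard, a Boolean predicate $[\![q]\!]$ (e.g. $[\![\forall]\!]$ = conjunction, $[\![\exists]\!]$ = disjunction); terms $t ::= c \mid y$. Input variables $x$ are bound by binders $c?x$; labels are unique. Translation: $T(\mathsf{0},\varphi)=\emptyset$; $T(!P,\varphi)=T(P,\varphi)$; $T(P_1\mid P_2,\varphi)=T(P_1,\varphi)\cup T(P_2,\varphi)$; $T((\nu c)P,\varphi)=T(P,\varphi)$; $T({^l}b.P,\varphi)=T(P,\varphi\wedge \mathsf{hp}(b))\cup\mathsf{th}(\varphi,b)\cup\{\varphi\leadsto\bar{l}\}$; $T({^l}\bar{c}\langle t\rangle.P,\varphi)=T(P,\varphi)\cup\{\varphi\leadsto\bar{c}\}\cup\{\varphi\leadsto\bar{l}\}$; $T({^l}\mathsf{case}\ x\ \mathsf{of}\ \mathsf{some}(y):P_1\ \mathsf{else}\ P_2,\varphi)=T(P_1,\varphi\wedge\bar{x})\cup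 T(P_2,\varphi\wedge\neg\bar{x})\cup\{\varphi\leadsto\bar{l}\}$; with $\mathsf{hp}(c?x)=\bar{c}$, $\mathsf{th}(\varphi,c?x)=\{(\varphi\wedge\bar{c})\leadsto\bar{x}\}$, $\mathsf{hp}(\&_q(b_1,\dots,b_n))=[\![q]\!](\mathsf{hp}(b_1),\dots,\mathsf{hp}(b_n))$, $\mathsf{th}(\varphi,\&_q(b_1,\dots,b_n))=\bigcup_i\mathsf{th}(\varphi,b_i)$. Here $\bar{c},\bar{x},\bar{l}$ are propositional literals for channels, input variables and labels. The set $T(P,\mathsf{tt})$ is normalised by replacing any two constraints $\varphi\leadsto\bar{p}$, $\varphi'\leadsto\bar{p}$ with the same consequent by $(\varphi\vee\varphi')\leadsto\bar{p}$. $P^l_{\Rightarrow}$ is the resulting normalised set with each $\leadsto$ read as propositional implication $\Rightarrow$. *)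

(* Defs.v *)
From Stdlib Require Import List Arith.
Import ListNotations.

(* Identifiers: channel names, input variables (bound by c?x),
   data variables (bound by case ... some(y)), labels. *)
Definition name := nat.
Definition ivar := nat.
Definition dvar := nat.
Definition label := nat.

Inductive form (A : Type) : Type :=
| FTT : form A
| FFF : form A
| FAt : A -> form A
| FNot : form A -> form A
| FAnd : form A -> form A -> form A
| FOr : form A -> form A -> form A.
Arguments FTT {A}. Arguments FFF {A}. Arguments FAt {A} _.
Arguments FNot {A} _. Arguments FAnd {A} _ _. Arguments FOr {A} _ _.

Fixpoint fsubst {A B : Type} (f : form A) (s : A -> form B) : form B :=
  match f with
  | FTT => FTT
  | FFF => FFF
  | FAt a => s a
  | FNot g => FNot (fsubst g s)
  | FAnd g h => FAnd (fsubst g s) (fsubst h s)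
  | FOr g h => FOr (fsubst g s) (fsubst h s)
  end.

Fixpoint atoms {A : Type} (f : form A) : list A :=
  match f with
  | FTT | FFF => []
  | FAt a => [a]
  | FNot g => atoms g
  | FAnd g h | FOr g h => atoms g ++ atoms h
  end.

(* A quality guard q is a Boolean predicate [[q]], given as a propositional
   formula whose atoms are argument positions 0,1,...,n-1. *)
Definition qguard := form nat.
Definition qapp {A : Type} (q : qguard) (phis : list (form A)) : form A :=
  fsubst q (fun i => nth i phis FFF).

Definition q_forall (n : nat) : qguard :=
  fold_right (fun i f => FAnd (FAt i) f) FTT (seq 0 n).
Definition q_exists (n : nat) : qguard :=
  fold_right (fun i f => FOr (FAt i) f) FFF (seq 0 n).

Inductive atom : Type :=
| AChan : name -> atom
| AVar : ivar -> atom
| ALab : label -> atom.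

Definition atom_eq_dec : forall a b : atom, {a = b} + {a <> b}.
Proof. decide equality; apply Nat.eq_dec. Defined.

Definition pform := form atom.

Inductive term : Type :=
| TName : name -> term
| TVar : dvar -> term.

Inductive binder : Type :=
| BIn : name -> ivar -> binder
| BQ : qguard -> binders -> binder
with binders : Type :=
| BNil : binders
| BCons : binder -> binders -> binders.

Inductive proc : Type :=
| PNil : proc
| PNew : name -> proc -> proc
| PPar : proc -> proc -> proc
| PIn : label -> binder -> proc -> proc
| POut : label -> name -> term -> proc -> proc
| PBang : proc -> proc
| PCase : label -> ivar -> dvar -> proc -> proc -> proc.
  (* ^l case x of some(y): P1 else P2 *)

Fixpoint bvars (b : binder) : list ivar :=
  match b with
  | BIn _ x => [x]
  | BQ _ bs => bsvars bs
  end
with bsvars (bs : binders) : list ivar :=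
  match bs with
  | BNil => []
  | BCons b bs' => bvars b ++ bsvars bs'
  end.

Fixpoint input_vars (P : proc) : list ivar :=
  match P with
  | PNil => []
  | PNew _ P => input_vars P
  | PPar P1 P2 => input_vars P1 ++ input_vars P2
  | PIn _ b P => bvars b ++ input_vars P
  | POut _ _ _ P => input_vars P
  | PBang P => input_vars P
  | PCase _ _ _ P1 P2 => input_vars P1 ++ input_vars P2
  end.

Fixpoint data_vars (P : proc) : list dvar :=
  match P with
  | PNil => []
  | PNew _ P => data_vars P
  | PPar P1 P2 => data_vars P1 ++ data_vars P2
  | PIn _ _ P => data_vars P
  | POut _ _ _ P => data_vars P
  | PBang P => data_vars P
  | PCase _ _ y P1 P2 => y :: data_vars P1 ++ data_vars P2
  end.

Fixpoint bound_names (P : proc) : list name :=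
  match P with
  | PNil => []
  | PNew c P => c :: bound_names P
  | PPar P1 P2 => bound_names P1 ++ bound_names P2
  | PIn _ _ P => bound_names P
  | POut _ _ _ P => bound_names P
  | PBang P => bound_names P
  | PCase _ _ _ P1 P2 => bound_names P1 ++ bound_names P2
  end.

Fixpoint labels (P : proc) : list label :=
  match P with
  | PNil => []
  | PNew _ P => labels P
  | PPar P1 P2 => labels P1 ++ labels P2
  | PIn l _ P => l :: labels P
  | POut l _ _ P => l :: labels P
  | PBang P => labels P
  | PCase l _ _ P1 P2 => l :: labels P1 ++ labels P2
  end.

Fixpoint free_ivars (P : proc) : list ivar :=
  match P with
  | PNil => []
  | PNew _ P => free_ivars P
  | PPar P1 P2 => free_ivars P1 ++ free_ivars P2
  | PIn _ b P => filter (fun z => negb (existsb (Nat.eqb z) (bvars b))) (free_ivars P)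
  | POut _ _ _ P => free_ivars P
  | PBang P => free_ivars P
  | PCase _ x _ P1 P2 => x :: free_ivars P1 ++ free_ivars P2
  end.

Fixpoint free_dvars (P : proc) : list dvar :=
  match P with
  | PNil => []
  | PNew _ P => free_dvars P
  | PPar P1 P2 => free_dvars P1 ++ free_dvars P2
  | PIn _ _ P => free_dvars P
  | POut _ _ t P =>
      match t with TVar y => y :: free_dvars P | TName _ => free_dvars P end
  | PBang P => free_dvars P
  | PCase _ _ y P1 P2 =>
      filter (fun z => negb (Nat.eqb z y)) (free_dvars P1) ++ free_dvars P2
  end.

Definition closed (P : proc) : Prop := free_ivars P = [] /\ free_dvars P = [].

Definition bound_once (P : proc) : Prop :=
  NoDup (input_vars P) /\ NoDup (data_vars P) /\ NoDup (bound_names P).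

Definition labels_unique (P : proc) : Prop := NoDup (labels P).

Definition constr := (pform * atom)%type.

Fixpoint hp (b : binder) : pform :=
  match b with
  | BIn c _ => FAt (AChan c)
  | BQ q bs => qapp q (hps bs)
  end
with hps (bs : binders) : list pform :=
  match bs with
  | BNil => []
  | BCons b bs' => hp b :: hps bs'
  end.

Fixpoint th (phi : pform) (b : binder) : list constr :=
  match b with
  | BIn c x => [(FAnd phi (FAt (AChan c)), AVar x)]
  | BQ _ bs => ths phi bs
  end
with ths (phi : pform) (bs : binders) : list constr :=
  match bs with
  | BNil => []
  | BCons b bs' => th phi b ++ ths phi bs'
  end.

Fixpoint T (P : proc) (phi : pform) : list constr :=
  match P with
  | PNil => []
  | PBang P => T P phi
  | PPar P1 P2 => T P1 phi ++ T P2 phi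
  | PNew _ P => T P phi
  | PIn l b P => T P (FAnd phi (hp b)) ++ th phi b ++ [(phi, ALab l)]
  | POut l c _ P => T P phi ++ [(phi, AChan c)] ++ [(phi, ALab l)]
  | PCase l x _ P1 P2 =>
      T P1 (FAnd phi (FAt (AVar x))) ++ T P2 (FAnd phi (FNot (FAt (AVar x))))
        ++ [(phi, ALab l)]
  end.

Definition disj (l : list pform) : pform :=
  match l with
  | [] => FFF
  | f :: r => fold_left FOr r f
  end.

Definition normalise (cs : list constr) : list constr :=
  map (fun p => (disj (map fst (filter (fun c => if atom_eq_dec (snd c) p then true else false) cs)), p))
      (nodup atom_eq_dec (map snd cs)).

(* P^l_=> : the normalised set T(P, tt), each ~> read as implication
   (a pair (phi, p) stands for phi => p).  The label l plays no role in the
   definition given in the paper's context. *)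
Definition Pimp (P : proc) (l : label) : list constr := normalise (T P FTT).

(* Main.v *)
Require Import Defs.
From Stdlib Require Import List Arith.
Import ListNotations.

Scheme binder_mut := Induction for binder Sort Prop
with binders_mut := Induction for binders Sort Prop.

Lemma atoms_fsubst {A B} (f : form A) (s : A -> form B) a :
  In a (atoms (fsubst f s)) -> exists i, In a (atoms (s i)).
Proof.
  induction f; simpl; intros H; try contradiction; eauto;
  apply in_app_or in H; destruct H; eauto.
Qed.

Lemma hp_atoms : forall b a, In a (atoms (hp b)) -> exists c, a = AChan c.
Proof.
  apply (binder_mut (fun b => forall a, In a (atoms (hp b)) -> exists c, a = AChan c)
                    (fun bs => forall i a, In a (atoms (nth i (hps bs) FFF)) -> exists c, a = AChan c)).
  - simpl; intros c x a [H|[]]; eauto.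
  - intros q bs IH a H. unfold qapp in H. apply atoms_fsubst in H as [i Hi]. eauto.
  - intros [|i] a []; simpl in *.
  - intros b IHb bs IHbs [|i] a H; simpl in H; eauto.
Qed.

Lemma th_in : forall b phi psi x, In (psi, AVar x) (th phi b) ->
  In x (bvars b) /\ psi = FAnd phi (FAt (AChan (match b with BIn c _ => c | _ => 0 end))) \/ 
  (In x (bvars b) /\ forall a, In (AVar a) (atoms psi) -> In (AVar a) (atoms phi)).
Abort.

Lemma th_in : forall b phi psi x, In (psi, AVar x) (th phi b) ->
  In x (bvars b) /\ (forall a, In (AVar a) (atoms psi) -> In (AVar a) (atoms phi)).
Proof.
  intros b phi.
  apply (binder_mut (fun b => forall psi x, In (psi, AVar x) (th phi b) ->
     In x (bvars b) /\ (forall a, In (AVar a) (atoms psi) -> In (AVar a) (atoms phi)))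
    (fun bs => forall psi x, In (psi, AVar x) (ths phi bs) ->
     In x (bsvars bs) /\ (forall a, In (AVar a) (atoms psi) -> In (AVar a) (atoms phi)))).
  - simpl. intros c x psi y [H|[]]. inversion H; subst. split; auto.
    simpl. intros a Ha. apply in_app_or in Ha as [Ha|[Ha|[]]]; [auto|discriminate].
  - simpl; auto.
  - simpl; contradiction.
  - simpl. intros b0 IHb bs IHbs psi x H. apply in_app_or in H as [H|H].
    + destruct (IHb _ _ H); split; auto. apply in_or_app; auto.
    + destruct (IHbs _ _ H); split; auto. apply in_or_app; auto.
Qed.

Lemma th_ex : forall b phi x, In x (bvars b) -> exists psi, In (psi, AVar x) (th phi b).
Proof.
  intros b phi.
  apply (binder_mut (fun b => forall x, In x (bvars b) -> exists psi, In (psi, AVar x) (th phi b))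
    (fun bs => forall x, In x (bsvars bs) -> exists psi, In (psi, AVar x) (ths phi bs))).
  - simpl. intros c x y [H|[]]; subst; eauto.
  - simpl; auto.
  - simpl; contradiction.
  - simpl. intros b0 IHb bs IHbs x H. apply in_app_or in H as [H|H].
    + destruct (IHb _ H) as [p Hp]; exists p; apply in_or_app; auto.
    + destruct (IHbs _ H) as [p Hp]; exists p; apply in_or_app; auto.
Qed.

Lemma T_in_vars : forall P phi psi x, In (psi, AVar x) (T P phi) -> In x (input_vars P).
Proof.
  induction P; simpl; intros phi psi x H; try contradiction; eauto.
  - apply in_app_or in H as [H|H]; apply in_or_app; eauto.
  - apply in_app_or in H as [H|H]; apply in_or_app; [right; eauto|].
    apply in_app_or in H as [H|[H|[]]]; [|discriminate].
    left. apply (th_in _ _ _ _ H).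
  - apply in_app_or in H as [H|H]; [eauto|].
    destruct H as [H|[H|[]]]; discriminate.
  - apply in_app_or in H as [H|H]; apply in_or_app; [left; eauto|].
    apply in_app_or in H as [H|[H|[]]]; [right; eauto|discriminate].
Qed.

Lemma T_ex : forall P phi x, In x (input_vars P) -> exists psi, In (psi, AVar x) (T P phi).
Proof.
  induction P; simpl; intros phi x H; try contradiction; eauto.
  - apply in_app_or in H as [H|H]; [destruct (IHP1 phi x H) as [p Hp]|destruct (IHP2 phi x H) as [p Hp]];
      exists p; apply in_or_app; auto.
  - apply in_app_or in H as [H|H].
    + destruct (th_ex b phi x H) as [p Hp]; exists p; apply in_or_app; right; apply in_or_app; auto.
    + destruct (IHP (FAnd phi (hp b)) x H) as [p Hp]; exists p; apply in_or_app; auto.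
  - destruct (IHP phi x H) as [p Hp]; exists p; apply in_or_app; auto.
  - apply in_app_or in H as [H|H].
    + destruct (IHP1 (FAnd phi (FAt (AVar i))) x H) as [p Hp]; exists p; apply in_or_app; auto.
    + destruct (IHP2 (FAnd phi (FNot (FAt (AVar i)))) x H) as [p Hp]; exists p;
        apply in_or_app; right; apply in_or_app; auto.
Qed.

Lemma NoDup_app_l {A} (l1 l2 : list A) : NoDup (l1 ++ l2) -> NoDup l1.
Proof. intros H. apply NoDup_app_remove_r in H; auto. Qed.
Lemma NoDup_app_r {A} (l1 l2 : list A) : NoDup (l1 ++ l2) -> NoDup l2.
Proof. intros H. apply NoDup_app_remove_l in H; auto. Qed.

Lemma NoDup_app_not_in {A} (l1 l2 : list A) : NoDup (l1 ++ l2) -> forall a, In a l1 -> ~ In a l2.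
Proof.
  induction l1; simpl; intros H b Hb; [contradiction|].
  inversion H; subst. destruct Hb as [<-|Hb].
  - intros Hn. apply H2. apply in_or_app; auto.
  - eauto.
Qed.

Lemma T_key : forall P phi psi x, In (psi, AVar x) (T P phi) -> NoDup (input_vars P) ->
  In (AVar x) (atoms psi) -> In (AVar x) (atoms phi) \/ In x (free_ivars P).
Proof.
  induction P; simpl; intros phi psi x H ND Ha; try contradiction; eauto.
  - apply in_app_or in H as [H|H].
    + destruct (IHP1 _ _ _ H (NoDup_app_l _ _ ND) Ha); auto. right; apply in_or_app; auto.
    + destruct (IHP2 _ _ _ H (NoDup_app_r _ _ ND) Ha); auto. right; apply in_or_app; auto.
  - apply in_app_or in H as [H|H].
    + destruct (IHP _ _ _ H (NoDup_app_r _ _ ND) Ha) as [H1|H1].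
      * simpl in H1. apply in_app_or in H1 as [H1|H1]; auto.
        destruct (hp_atoms _ _ H1); discriminate.
      * destruct (existsb (Nat.eqb x) (bvars b)) eqn:E.
        -- exfalso. apply existsb_exists in E as [z [Hz Ez]].
           apply Nat.eqb_eq in Ez; subst z.
           apply (NoDup_app_not_in _ _ ND x Hz). eapply T_in_vars; eauto.
        -- right. apply filter_In. rewrite E. auto.
    + apply in_app_or in H as [H|[H|[]]]; [|discriminate].
      left. apply (th_in _ _ _ _ H); auto.
  - apply in_app_or in H as [H|H]; eauto. destruct H as [H|[H|[]]]; discriminate.
  - apply in_app_or in H as [H|H].
    + destruct (IHP1 _ _ _ H (NoDup_app_l _ _ ND) Ha) as [H1|H1].
      * simpl in H1. apply in_app_or in H1 as [H1|[H1|[]]]; auto.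
        inversion H1; subst; auto.
      * right; right; apply in_or_app; auto.
    + apply in_app_or in H as [H|[H|[]]]; [|discriminate].
      destruct (IHP2 _ _ _ H (NoDup_app_r _ _ ND) Ha) as [H1|H1].
      * simpl in H1. apply in_app_or in H1 as [H1|[H1|[]]]; auto.
        inversion H1; subst; auto.
      * right; right; apply in_or_app; auto.
Qed.

Lemma fold_or_atoms : forall (r : list pform) (f : pform) (a : atom), In a (atoms (fold_left FOr r f)) ->
  In a (atoms f) \/ exists g, In g r /\ In a (atoms g).
Proof.
  induction r; simpl; intros f a0 H; auto.
  destruct (IHr _ _ H) as [H1|[g [Hg1 Hg2]]].
  - simpl in H1. apply in_app_or in H1 as [H1|H1]; eauto.
  - eauto.
Qed.

Lemma disj_atoms : forall (l : list pform) (a : atom), In a (atoms (disj l)) -> exists g, In g l /\ In a (atoms g).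
Proof.
  intros [|f r] a H; simpl in H; [contradiction|].
  destruct (fold_or_atoms _ _ _ H) as [H1|[g [H2 H3]]].
  - exists f; simpl; auto.
  - exists g; simpl; auto.
Qed.

Theorem lemmaB1 (P : proc) (l : label) :
  closed P -> bound_once P -> labels_unique P ->
  forall x : ivar, In x (input_vars P) ->
    (exists phi : pform, In (phi, AVar x) (Pimp P l) /\ ~ In (AVar x) (atoms phi)) /\
    (forall phi phi' : pform,
        In (phi, AVar x) (Pimp P l) -> In (phi', AVar x) (Pimp P l) -> phi = phi').
Proof.
  intros [Hc _] [ND _] _ x Hx.
  unfold Pimp, normalise.
  split.
  - eexists. split.
    + apply in_map_iff. exists (AVar x). split; [reflexivity|].
      apply nodup_In. destruct (T_ex P FTT x Hx) as [p Hp].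
      apply in_map_iff. exists (p, AVar x); auto.
    + intros H. apply disj_atoms in H as [g [Hg1 Hg2]].
      apply in_map_iff in Hg1 as [[f a] [E Hf]]. simpl in E; subst f.
      apply filter_In in Hf as [Hf Ea]. simpl in Ea.
      destruct (atom_eq_dec a (AVar x)); [subst|discriminate].
      destruct (T_key P FTT g x Hf ND Hg2) as [H|H]; [simpl in H; auto|].
      rewrite Hc in H; auto.
  - intros phi phi' H1 H2.
    apply in_map_iff in H1 as [p1 [E1 _]]. apply in_map_iff in H2 as [p2 [E2 _]].
    inversion E1; inversion E2; subst. congruence.
Qed.
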